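(* Let $\Gamma$ be a labeled graph having a connected component with an odd number of edges. Then $c_\Gamma=0$.
   Context: A labeled graph with $V$ vertices and $E$ edges is a map $s:\{1,\ldots,E\}\to\mathcal{P}_2\{1,\ldots,V\}$ (edge $e$ joins the two vertices in $s(e)$; multiple edges allowed). Each edge with $s(e)=\{i,j\}$, $i<j$, is oriented $i\to j$. Define $c_\Gamma:=\sum_{\sigma\in S_V}\prod_{e:\,i\to j}\operatorname{sign}(\sigma(j)-\sigma(i))$, i.e. the sum over all renumberings of the vertices of $(-1)^{\#\text{edges whose orientation is inverted}}$, where after renumbering each edge is oriented from lower to higher label. *)

(* Defs.v *)
From mathcomp Require Import all_boot all_order all_algebra all_fingroup.
Set Implicit Arguments. Unset Strict Implicit. Unset Printing Implicit Defensive.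
Import Order.TTheory GRing.Theory Num.Theory.

(* A labeled graph with V vertices and E edges: each edge e joins the two
   distinct vertices (s e).1 < (s e).2, i.e. s e encodes the 2-subset
   {(s e).1, (s e).2}, oriented (s e).1 -> (s e).2.  Multiple edges allowed. *)
Record lgraph (V E : nat) := LGraph {
  ends : 'I_E -> 'I_V * 'I_V ;
  ends_lt : forall e, ((ends e).1 < (ends e).2)%N
}.

Definition sgn_nat (a b : nat) : int := if (b < a)%N then 1%R else (-1)%R.

Definition cGamma V E (G : lgraph V E) : int :=
  (\sum_(sigma : 'S_V) \prod_(e < E)
      sgn_nat (sigma (ends G e).2) (sigma (ends G e).1))%R.

Definition adj V E (G : lgraph V E) : rel 'I_V :=
  fun u v => [exists e : 'I_E,
     ((ends G e).1 == u) && ((ends G e).2 == v)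
  || ((ends G e).1 == v) && ((ends G e).2 == u)].

Definition component V E (G : lgraph V E) (v : 'I_V) : {set 'I_V} :=
  [set u | connect (adj G) v u].

Definition comp_edges V E (G : lgraph V E) (C : {set 'I_V}) : nat :=
  #|[set e : 'I_E | (ends G e).1 \in C]|.

Definition has_odd_component V E (G : lgraph V E) : Prop :=
  exists v : 'I_V, odd (comp_edges G (component G v)).

(* Main.v *)
Require Import Defs.
From mathcomp Require Import all_boot all_order all_algebra all_fingroup.
From mathcomp Require Import zify.
Set Implicit Arguments. Unset Strict Implicit. Unset Printing Implicit Defensive.

Section R.
Variable n : nat.

Lemma enum_sorted (S : {set 'I_n}) : sorted (fun a b : 'I_n => (a < b)%N) (enum S).
Proof.
have -> : enum S = filter (mem S) (enum 'I_n) by rewrite enumT /enum_mem.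
apply: sorted_filter; first by move=> a b c; apply: ltn_trans.
by have := iota_ltn_sorted 0 n; rewrite -val_enum_ord sorted_map.
Qed.

Variable s : seq 'I_n.
Hypothesis s_sorted : sorted (fun a b : 'I_n => (a < b)%N) s.
Hypothesis s_uniq : uniq s.

Ltac slia := repeat match goal with H : context[size _] |- _ => revert H end; let m := fresh "m" in set m := size s; clearbody m; intros; lia.

Definition rvs (x : 'I_n) : 'I_n := nth x (rev s) (index x s).

Lemma rvs_out x : x \notin s -> rvs x = x.
Proof.
move=> xS; rewrite /rvs nth_default // size_rev.
by rewrite memNindex.
Qed.

Lemma rvs_in x : x \in s -> rvs x = nth x s (size s - (index x s).+1).
Proof.
move=> xS; rewrite /rvs nth_rev // index_mem //.
Qed.

Lemma rvs_mem x : x \in s -> rvs x \in s.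
Proof.
move=> xS; rewrite rvs_in // mem_nth //.
have : (index x s < size s)%N by rewrite index_mem.
move=> hh; slia.
Qed.

Lemma rvsK : involutive rvs.
Proof.
move=> x; case: (boolP (x \in s)) => xS; last by rewrite !rvs_out.
have hi : (index x s < size s)%N by rewrite index_mem.
rewrite (rvs_in (rvs_mem xS)) {2}(rvs_in xS) index_uniq //; last by slia.
rewrite rvs_in // (set_nth_default x); last by slia.
have -> : (size s - (size s - (index x s).+1).+1 = index x s)%N by slia.
by rewrite nth_index.
Qed.

Lemma rvs_lt x y : x \in s -> y \in s -> (x < y)%N -> (rvs y < rvs x)%N.
Proof.
move=> xS yS xy.
have hx : (index x s < size s)%N by rewrite index_mem.
have hy : (index y s < size s)%N by rewrite index_mem.
have ltr : transitive (fun a b : 'I_n => (a < b)%N) by move=> a b c; apply: ltn_trans.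
have hnth := sorted_ltn_nth ltr x s_sorted.
have ij : (index x s < index y s)%N.
  case: (ltngtP (index x s) (index y s)) => // h.
    have := hnth _ _ hy hx h; rewrite (set_nth_default y x) // !nth_index //.
    move=> hh; slia.
  have : nth x s (index x s) = nth x s (index y s) by rewrite h.
  rewrite (set_nth_default y x hy) !nth_index // => exy.
  by rewrite exy ltnn in xy.
rewrite rvs_in // rvs_in // (set_nth_default x y); last by slia.
apply: hnth; rewrite ?inE /=; slia.
Qed.

End R.

Import GRing.Theory Num.Theory.

Definition rho n (S : {set 'I_n}) : 'S_n := perm (inv_inj (rvsK (enum_sorted S) (enum_uniq (mem S)))).

Lemma rhoE n (S : {set 'I_n}) x : rho S x = rvs (enum S) x.
Proof. by rewrite permE. Qed.

Lemma rho_in n (S : {set 'I_n}) x : x \in S -> rho S x \in S.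
Proof. by move=> xS; rewrite rhoE -mem_enum (rvs_mem (enum_sorted S) (enum_uniq _)) // mem_enum. Qed.

Lemma rho_out n (S : {set 'I_n}) x : x \notin S -> rho S x = x.
Proof. by move=> xS; rewrite rhoE rvs_out // mem_enum. Qed.

Lemma rhoK n (S : {set 'I_n}) : (rho S * rho S = 1)%g.
Proof. by apply/permP => x; rewrite permM perm1 !rhoE (rvsK (enum_sorted S) (enum_uniq _)). Qed.

Lemma rho_im n (S : {set 'I_n}) : rho S @: S = S.
Proof.
apply/setP => x; apply/imsetP/idP => [[y yS ->]|xS]; first exact: rho_in.
exists (rho S x); first exact: rho_in.
by rewrite -permM rhoK perm1.
Qed.

Lemma rho_lt n (S : {set 'I_n}) x y : x \in S -> y \in S -> (x < y)%N -> (rho S y < rho S x)%N.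
Proof.
move=> xS yS xy; rewrite !rhoE; apply: rvs_lt => //; rewrite ?mem_enum //.
  exact: enum_sorted.
exact: enum_uniq.
Qed.

Section Main.
Variables (V E : nat) (G : lgraph V E) (v : 'I_V).
Let C := component G v.

Definition flip (s : 'S_V) : 'S_V := (s * rho (s @: C))%g.

Lemma flipK : involutive flip.
Proof.
move=> s; rewrite /flip.
have -> : (s * rho (s @: C))%g @: C = s @: C.
  rewrite -{2}(rho_im (s @: C)) -imset_comp; apply: eq_imset => x /=; by rewrite permM.
by rewrite -mulgA rhoK mulg1.
Qed.

Lemma adj_e e : adj G (ends G e).1 (ends G e).2 /\ adj G (ends G e).2 (ends G e).1.
Proof. by split; apply/existsP; exists e; rewrite !eqxx ?orbT. Qed.

Lemma comp_e e : ((ends G e).1 \in C) = ((ends G e).2 \in C).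
Proof.
have [h1 h2] := adj_e e; rewrite !inE; apply/idP/idP => h.
  exact: connect_trans h (connect1 h1).
exact: connect_trans h (connect1 h2).
Qed.

Definition term (s : 'S_V) : int := (\prod_(e < E) sgn_nat (s (ends G e).2) (s (ends G e).1))%R.

Lemma term_e (s : 'S_V) e :
  sgn_nat (flip s (ends G e).2) (flip s (ends G e).1) =
  ((if (ends G e).1 \in C then -1 else 1) * sgn_nat (s (ends G e).2) (s (ends G e).1))%R.
Proof.
rewrite /flip !permM.
case: ifP => ha.
  have hb : (ends G e).2 \in C by rewrite -comp_e.
  have sa : s (ends G e).1 \in s @: C by apply: imset_f.
  have sb : s (ends G e).2 \in s @: C by apply: imset_f.
  have ne : (s (ends G e).1 != s (ends G e).2).
    rewrite (inj_eq perm_inj); apply/eqP => h.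
    by have := ends_lt G e; rewrite h ltnn.
  rewrite /sgn_nat mulN1r.
  case: (ltngtP (s (ends G e).1) (s (ends G e).2)) => h.
  - have h2 := rho_lt sa sb h.
    by rewrite ltnNge (ltnW h2) /= ?h ?opprK.
  - have h2 := rho_lt sb sa h.
    by rewrite h2 opprK.
  - by move/val_inj: h => h; rewrite h eqxx in ne.
have hb : (ends G e).2 \notin C by rewrite -comp_e ha.
rewrite !rho_out ?mul1r // mem_imset ?ha ?(negbTE hb) //; exact: perm_inj.
Qed.

Lemma term_flip s : odd (comp_edges G C) -> term (flip s) = (- term s)%R.
Proof.
move=> hodd; rewrite /term (eq_bigr _ (fun e _ => term_e s e)) big_split /=.
rewrite -big_mkcond /= prodr_const.
have -> : #|[pred e : 'I_E | (ends G e).1 \in C]| = comp_edges G C.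
  by rewrite /comp_edges; apply: eq_card => e; rewrite !inE.
by rewrite -signr_odd hodd expr1 mulN1r.
Qed.

End Main.

Theorem lemma5 (V E : nat) (G : lgraph V E) :
  has_odd_component G -> cGamma G = 0%R.
Proof.
move=> [v hodd].
have h : cGamma G = (- cGamma G)%R.
  rewrite {1}/cGamma (reindex_inj (inv_inj (flipK G v))) /= /cGamma -sumrN.
  apply: eq_bigr => s _; exact: (term_flip s hodd).
move: h; set x := cGamma G => h; lia.
Qed.
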